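(* Let $d_x, d_1, d_2 \ge 1$ be integers, let $\sigma:\mathbb{R}\to\mathbb{R}$ be a continuous piecewise linear function with $p\ge 2$ linear pieces, and let $\alpha_1,\alpha_2\in(0,1]$ be such that $\alpha_1 d_1$ and $\alpha_2 d_2$ are positive integers. Consider the architecture of fully connected networks $f_W:\mathbb{R}^{d_x}\to\mathbb{R}$ with two hidden layers of widths $\alpha_1 d_1$ and $\alpha_2 d_2$ (obtained by removing entire neurons, i.e. structured pruning), $$f_W(x) = W^3\,\sigma\big(W^2\,\sigma(W^1 x + b^1) + b^2\big) + b^3,$$ with $\sigma$ applied coordinatewise and $W^1\in\mathbb{R}^{\alpha_1 d_1\times d_x}$, $W^2\in\mathbb{R}^{\alpha_2 d_2\times \alpha_1 d_1}$, $W^3\in\mathbb{R}^{1\times \alpha_2 d_2}$, $b^1,b^2,b^3$ of matching dimensions. Then the memorization capacity of this architecture is at most $$\alpha_1\alpha_2 d_1 d_2\, p(p-1) + \alpha_2 d_2(p-1) + 2.$$ In particular, for ReLU ($p=2$) it is at most $2\alpha_1\alpha_2 d_1 d_2 + \alpha_2 d_2 + 2$.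
   Context: Memorization capacity: for a network architecture $f_W$ with learnable parameters $W$ and input dimension $d_x$, the memorization capacity is the largest $N$ such that for every choice of inputs $x_1,\dots,x_N\in\mathbb{R}^{d_x}$ (pairwise distinct) and every choice of labels $y_1,\dots,y_N\in[-1,1]$, there exist parameters $W$ with $f_W(x_i)=y_i$ for all $1\le i\le N$. A function $\mathbb{R}\to\mathbb{R}$ has ''$p$ linear pieces'' if $\mathbb{R}$ can be partitioned into $p$ intervals on each of which it is affine (and not fewer). *)

(* Defs.v *)
From mathcomp Require Import all_boot all_order all_algebra.
From mathcomp Require Import all_classical all_reals all_analysis.
Set Implicit Arguments. Unset Strict Implicit. Unset Printing Implicit Defensive.
Import Order.TTheory GRing.Theory Num.Theory.
Local Open Scope ring_scope.

Definition affine_on (R : realType) (sigma : R -> R) (I : interval R) : Prop :=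
  exists a b : R, forall x : R, x \in I -> sigma x = a * x + b.

Definition affine_partition (R : realType) (sigma : R -> R) (n : nat) : Prop :=
  exists I : 'I_n -> interval R,
    (forall x : R, exists! i : 'I_n, x \in I i) /\
    (forall i : 'I_n, affine_on sigma (I i)).

Definition has_linear_pieces (R : realType) (sigma : R -> R) (p : nat) : Prop :=
  affine_partition sigma p /\ (forall n, (n < p)%N -> ~ affine_partition sigma n).

Definition net (R : realType) (sigma : R -> R) (dx k1 k2 : nat)
  (W1 : 'M[R]_(k1, dx)) (b1 : 'cV[R]_k1)
  (W2 : 'M[R]_(k2, k1)) (b2 : 'cV[R]_k2)
  (W3 : 'M[R]_(1, k2)) (b3 : R) (x : 'cV[R]_dx) : R :=
  (W3 *m map_mx sigma (W2 *m map_mx sigma (W1 *m x + b1) + b2)) 0 0 + b3.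

Definition memorizes (R : realType) (sigma : R -> R) (dx k1 k2 N : nat) : Prop :=
  forall (X : 'I_N -> 'cV[R]_dx) (Y : 'I_N -> R),
    injective X -> (forall i, -1 <= Y i <= 1) ->
    exists (W1 : 'M[R]_(k1, dx)) (b1 : 'cV[R]_k1)
           (W2 : 'M[R]_(k2, k1)) (b2 : 'cV[R]_k2)
           (W3 : 'M[R]_(1, k2)) (b3 : R),
      forall i, net sigma W1 b1 W2 b2 W3 b3 (X i) = Y i.

(* Main.v *)
Require Import Defs.
From mathcomp Require Import all_boot all_order all_algebra.
From mathcomp Require Import all_classical all_reals all_analysis.
From mathcomp Require Import ring lra zify.
Import Order.TTheory GRing.Theory Num.Theory numFieldNormedType.Exports.
Set Implicit Arguments. Unset Strict Implicit.
Local Open Scope ring_scope.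

Section PL.
Variable RR : realFieldType.

Implicit Types (f g : RR -> RR) (s t : seq RR) (a b : RR).

Definition aff f a b := exists al be : RR, forall x, a <= x <= b -> f x = al * x + be.
Definition PLs f s := forall a b, (forall c, c \in s -> (c <= a) || (b <= c)) -> aff f a b.
Definition PLn f (m : nat) := exists s, (size s <= m)%N /\ PLs f s.

Lemma PLs_ext f g s : (forall x, f x = g x) -> PLs f s -> PLs g s.
Proof.
move=> E H a b /H [al [be Hab]]; exists al, be => x hx; by rewrite -E Hab.
Qed.

Lemma PLn_ext f g m : (forall x, f x = g x) -> PLn f m -> PLn g m.
Proof. by move=> E [s [hs H]]; exists s; split => //; apply: PLs_ext H. Qed.

Lemma PLn_mono f m m' : (m <= m')%N -> PLn f m -> PLn f m'.
Proof. by move=> le [s [hs H]]; exists s; split => //; apply: leq_trans le. Qed.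

Lemma PLn_aff al be : PLn (fun x => al * x + be) 0.
Proof. by exists [::]; split => // a b _; exists al, be. Qed.

Lemma PLn_add f g m n : PLn f m -> PLn g n -> PLn (fun x => f x + g x) (m + n).
Proof.
move=> [s [hs Hf]] [t [ht Hg]]; exists (s ++ t); split.
  by rewrite size_cat leq_add.
move=> a b H.
have [al [be E1]] : aff f a b by apply: Hf => c hc; apply: H; rewrite mem_cat hc.
have [al' [be' E2]] : aff g a b by apply: Hg => c hc; apply: H; rewrite mem_cat hc orbT.
exists (al + al'), (be + be') => x hx; rewrite E1 // E2 //; ring.
Qed.

Lemma PLn_scale c f m : PLn f m -> PLn (fun x => c * f x) m.
Proof.
move=> [s [hs Hf]]; exists s; split => // a b /Hf [al [be E]].
by exists (c * al), (c * be) => x hx; rewrite E //; ring.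
Qed.

Lemma PLn_sum n (F : 'I_n -> RR -> RR) m : (forall i, PLn (F i) m) ->
  PLn (fun x => \sum_(i < n) F i x) (n * m).
Proof.
elim: n F => [|n IH] F HF.
  apply: (@PLn_ext (fun x => 0 * x + 0)); last exact: PLn_aff.
  by move=> x; rewrite big_ord0; ring.
apply: (@PLn_ext (fun x => \sum_(i < n) F (widen_ord (leqnSn n) i) x + F ord_max x)).
  by move=> x; rewrite big_ord_recr.
rewrite mulSn addnC; apply: PLn_add; last exact: HF.
by apply: IH => i.
Qed.


Fixpoint prs_aux (x : RR) (s : seq RR) : seq (RR * RR) :=
  match s with [::] => [:: (x, x + 1)] | y :: s' => (x, y) :: prs_aux y s' end.
Definition prs (r : seq RR) : seq (RR * RR) :=
  match r with [::] => [:: (0, 1)] | x :: s => (x - 1, x) :: prs_aux x s end.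

Lemma size_prs_aux x s : size (prs_aux x s) = (size s).+1.
Proof. by elim: s x => [|y s IH] x //=; rewrite IH. Qed.

Lemma size_prs r : size (prs r) = (size r).+1.
Proof. by case: r => [|x s] //=; rewrite size_prs_aux. Qed.

Lemma path_ge x s : path <=%R x s -> forall e, e \in s -> x <= e.
Proof. by move=> /(order_path_min le_trans) /allP. Qed.

Lemma gap_aux a b s : forall x, a < b -> path <=%R x s -> x <= a ->
  (forall e, e \in x :: s -> (e <= a) || (b <= e)) ->
  exists l u, (l, u) \in prs_aux x s /\ l < u /\
    forall e, e \in x :: s -> (e <= Num.min a l) || (Num.max b u <= e).
Proof.
elim: s => [|y s IH] x ab hp xa He.
  exists x, (x + 1); split; first by rewrite inE.
  split; first by rewrite ltrDl.
  by move=> e; rewrite inE => /eqP ->; rewrite (min_r xa) lexx.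
move: hp => /= /andP [xy hp].
have [yb|by_] := leP b y.
  exists x, y; split; first exact: mem_head.
  split; first by apply: le_lt_trans xa (lt_le_trans ab yb).
  move=> e; rewrite in_cons => /orP [/eqP ->|he]; first by rewrite (min_r xa) lexx.
  apply/orP; right; rewrite (max_r yb).
  by move: he; rewrite in_cons => /orP [/eqP ->|/(@path_ge _ _ hp)].
have ya : y <= a.
  by have := He y; rewrite !inE eqxx orbT /= => /(_ isT) /orP [//|]; rewrite leNgt by_.
have [l [u [hin [lu H]]]] := IH y ab hp ya (fun e he => He e (@mem_behead _ [:: x, y & s] e he)).
exists l, u; split; first by rewrite in_cons hin orbT.
split => // e; rewrite in_cons => /orP [/eqP ->|]; last exact: H.
have := H y; rewrite inE eqxx => /(_ isT) /orP [hy|hy].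
  by rewrite (le_trans xy hy).
exfalso; move: hy; rewrite ge_max => /andP [h _].
by move: (le_trans h ya); rewrite leNgt ab.
Qed.
Arguments gap_aux {a b s x}.

Lemma gap a b r : a < b -> sorted <=%R r ->
  (forall e, e \in r -> (e <= a) || (b <= e)) ->
  exists l u, (l, u) \in prs r /\ l < u /\
    forall e, e \in r -> (e <= Num.min a l) || (Num.max b u <= e).
Proof.
case: r => [|x s] ab hp He.
  by exists 0, 1; split; [exact: mem_head| split].
have [xb|bx] := leP b x.
  exists (x - 1), x; split; first exact: mem_head.
  split; first by rewrite ltrBlDr ltrDl.
  move=> e; rewrite in_cons => /orP [/eqP ->|he]; apply/orP; right; rewrite (max_r xb) //.
  exact: (@path_ge _ _ hp).
have xa : x <= a.
  by have := He x (mem_head _ _) => /orP [//|]; rewrite leNgt bx.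
have [l [u [hin [lu H]]]] := gap_aux ab hp xa He.
by exists l, u; split; first by rewrite in_cons hin orbT.
Qed.
Arguments gap {a b r}.

Lemma PLn_comp sg g ms mt : PLn sg ms -> PLn g mt ->
  PLn (fun x => sg (g x)) (mt + mt.+1 * ms).
Proof.
move=> [S [hS Hs]] [T [hT Hg]].
pose r := sort <=%R T.
pose pt (q : RR * RR) c := q.1 + (c - g q.1) * (q.2 - q.1) / (g q.2 - g q.1).
exists (T ++ [seq pt q c | q <- prs r, c <- S]); split.
  by rewrite size_cat size_allpairs size_prs size_sort leq_add // leq_mul.
move=> a b H.
have [ba|ab] := leP b a.
  exists 0, (sg (g a)) => x /andP [h1 h2].
  have -> : x = a by apply/le_anti; rewrite h1 (le_trans h2 ba).
  by rewrite mul0r add0r.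
have HT : forall e, e \in r -> (e <= a) || (b <= e).
  by move=> e; rewrite mem_sort => he; apply: H; rewrite mem_cat he.
have [l [u [hlu [lu Hr]]]] := gap ab (sort_sorted le_total T) HT.
have [al [be Eg]] : aff g (Num.min a l) (Num.max b u).
  by apply: Hg => e he; apply: Hr; rewrite mem_sort.
have Hin : forall x, a <= x <= b -> Num.min a l <= x <= Num.max b u.
  move=> x /andP [h1 h2]; rewrite ge_min le_max h1 h2 //.
have Ega : g a = al * a + be by apply: Eg; apply: Hin; rewrite lexx ltW.
have Egb : g b = al * b + be by apply: Eg; apply: Hin; rewrite lexx ltW.
have Egl : g l = al * l + be by apply: Eg; rewrite ge_min le_max lexx (ltW lu) !orbT.
have Egu : g u = al * u + be by apply: Eg; rewrite ge_min le_max lexx (ltW lu) !orbT.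
have [al0|alnz] := eqVneq al 0.
  exists 0, (sg (g a)) => x hx.
  by rewrite Eg ?Hin // Ega al0 !mul0r !add0r.
have Hpt : forall c, pt (l, u) c = (c - be) / al.
  move=> c; rewrite /pt /=.
  have -> : g u - g l = al * (u - l) by rewrite Egu Egl; ring.
  rewrite Egl; field.
  by rewrite alnz /= subr_eq0 gt_eqF.
have HS : forall c, c \in S ->
    (c <= Num.min (g a) (g b)) || (Num.max (g a) (g b) <= c).
  move=> c hc.
  have hp : pt (l, u) c \in T ++ [seq pt q c | q <- prs r, c <- S].
    by rewrite mem_cat; apply/orP; right; apply: allpairs_f.
  have := H _ hp; rewrite Hpt Ega Egb.
  set x := (c - be) / al.
  have cx : c = al * x + be by rewrite /x; field.
  rewrite le_min ge_max cx.
  clearbody x; have [aln|alp|al0] := ltgtP al 0; last by move: alnz; rewrite al0 eqxx.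
    move=> /orP [hx|hx]; apply/orP; [right|left]; apply/andP; split; nra.
  move=> /orP [hx|hx]; apply/orP; [left|right]; apply/andP; split; nra.
have [ga [gd Es]] := Hs _ _ HS.
exists (ga * al), (ga * be + gd) => x hx.
have [h1 h2] : a <= x /\ x <= b by move: hx => /andP.
rewrite Eg ?Hin // Es; first ring.
rewrite ge_min le_max !Ega !Egb.
have [aln|alp|al0] := ltgtP al 0; last by move: alnz; rewrite al0 eqxx.
  by apply/andP; split; apply/orP; [right|left]; nra.
by apply/andP; split; apply/orP; [left|right]; nra.
Qed.

Lemma count_lt (P Q : pred RR) s c : (forall x, P x -> Q x) -> c \in s -> Q c -> ~~ P c ->
  (count P s < count Q s)%N.
Proof.
move=> PQ; elim: s => // y s IH; rewrite in_cons => /orP [/eqP <-|hc] Qc nPc /=.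
  rewrite Qc (negbTE nPc) add0n add1n ltnS; exact: sub_count.
rewrite -addnS; apply: leq_add; last exact: IH.
by case: (P y) (PQ y) => //= ->.
Qed.

Lemma max_pt f s u v x : PLs f s -> u <= x <= v ->
  exists w, [/\ w \in u :: v :: s, u <= w <= v & f x <= f w].
Proof.
move=> Hf.
have [n] := ubnP (count (fun c => (u < c) && (c < v)) s).
elim: n u v x => // n IH u v x hn hx.
have [/hasP [c cs /andP [uc cv]]|/hasPn hn'] := boolP (has (fun c => (u < c) && (c < v)) s).
  have [xc|cx] := leP x c.
    have hn2 : (count (fun c' : RR => (u < c')%R && (c' < c)%R) s < n)%N.
      move: hn; rewrite ltnS => hn; apply: (leq_trans _ hn); apply: (@count_lt _ _ _ c) => //.
        by move=> y /andP [-> /lt_trans ->].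
      by rewrite uc cv.
      by rewrite ltxx andbF.
    have [w [hw /andP [uw wc] fw]] := IH u c x hn2 ltac:(by move: hx => /andP [-> _]).
    exists w; split => //; last by rewrite uw (le_trans wc (ltW cv)).
    move: hw; rewrite !in_cons => /or3P [->|/eqP->|->]; by rewrite ?cs ?orbT.
  have hn2 : (count (fun c' : RR => (c < c')%R && (c' < v)%R) s < n)%N.
    move: hn; rewrite ltnS => hn; apply: (leq_trans _ hn); apply: (@count_lt _ _ _ c) => //.
      by move=> y /andP [/(lt_trans uc) -> ->].
    by rewrite uc cv.
    by rewrite ltxx.
  have [w [hw /andP [cw wv] fw]] := IH c v x hn2 ltac:(by move: hx => /andP [_ ->]; rewrite ltW).
  exists w; split => //; last by rewrite wv (le_trans (ltW uc) cw).
  move: hw; rewrite !in_cons => /or3P [/eqP->|->|->]; by rewrite ?cs ?orbT.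
have [al [be E]] : aff f u v.
  apply: Hf => c /hn' /=; rewrite negb_and -!leNgt.
  by case/orP => ->; rewrite ?orbT.
have [uv1 uv2] : u <= x /\ x <= v by move: hx => /andP.
have uv : u <= v := le_trans uv1 uv2.
have [al0|al0] := leP 0 al.
  exists v; split; first by rewrite !in_cons eqxx orbT.
    by rewrite uv lexx.
  rewrite !E ?uv1 ?uv2 ?lexx ?uv //; nra.
exists u; split; first by rewrite !in_cons eqxx.
  by rewrite uv lexx.
rewrite !E ?uv1 ?uv2 ?lexx ?uv //; nra.
Qed.

Lemma PLs_scale c f s : PLs f s -> PLs (fun x => c * f x) s.
Proof.
move=> Hf a b /Hf [al [be E]].
by exists (c * al), (c * be) => x hx; rewrite E //; ring.
Qed.

Lemma sgsq i : (-1) ^+ i * (-1) ^+ i = 1 :> RR.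
Proof. by rewrite -signr_odd; case: (odd i); rewrite ?mulr1 ?mulrNN ?mulr1. Qed.

Lemma alt_one f s i : PLs f s ->
  f i%:R = (-1) ^+ i -> f i.+1%:R = (-1) ^+ i.+1 -> f i.+2%:R = (-1) ^+ i.+2 ->
  exists c, [/\ c \in s, i%:R < c < i.+2%:R & 1 <= (-1) ^+ i.+1 * f c].
Proof.
move=> Hf f0 f1 f2.
have hx : ((i%:R : RR) <= i.+1%:R) && (i.+1%:R <= (i.+2%:R : RR)) by rewrite !ler_nat !leqnSn.
have [w [hw /andP [w1 w2] fw]] := max_pt (PLs_scale ((-1) ^+ i.+1) Hf) hx.
have sq : (-1) ^+ i.+1 * (-1) ^+ i.+1 = 1 :> RR by rewrite sgsq.
have e0 : (-1) ^+ i.+1 * f i%:R = -1 by rewrite f0 exprS mulN1r mulNr sgsq.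
have e2 : (-1) ^+ i.+1 * f i.+2%:R = -1 by rewrite f2 [X in _ * X]exprS mulN1r mulrN sgsq.
move: fw; rewrite f1 sq => fw.
move: hw; rewrite !in_cons => /or3P [/eqP wi|/eqP wi|ws].
- by exfalso; move: fw; rewrite wi e0 => fw; lra.
- by exfalso; move: fw; rewrite wi e2 => fw; lra.
exists w; split => //.
have w1' : w != i%:R by apply/eqP => wi; move: fw; rewrite wi e0 => fw; lra.
have w2' : w != i.+2%:R by apply/eqP => wi; move: fw; rewrite wi e2 => fw; lra.
by rewrite !lt_neqAle w1 w2 eq_sym w1' w2'.
Qed.

Lemma alternation f s N : PLs f s -> (forall i, (i < N)%N -> f i%:R = (-1) ^+ i) ->
  (N <= size s + 2)%N.
Proof.
move=> Hf HN.
have : forall i, exists c, (i.+2 < N)%N ->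
    [/\ c \in s, i%:R < c < i.+2%:R & 1 <= (-1) ^+ i.+1 * f c].
  move=> i; have [iN|] := ltnP i.+2 N; last by exists 0.
  have [c Hc] := alt_one Hf (HN i (ltnW (ltnW iN))) (HN i.+1 (ltnW iN)) (HN i.+2 iN).
  by exists c.
move=> /choice [c Hc].
pose L := map c (iota 0 (N - 2)).
have hi2 : forall i, i \in iota 0 (N - 2) -> (i.+2 < N)%N.
  by move=> i; rewrite mem_iota add0n ltn_subRL addnC addn2.
have uL : uniq L.
  rewrite map_inj_in_uniq ?iota_uniq // => i j /hi2 hi /hi2 hj E.
  have [ci1 /andP [ci2 ci3] ci4] := Hc i hi.
  have [cj1 /andP [cj2 cj3] cj4] := Hc j hj.
  wlog ij : i j hi hj E ci1 ci2 ci3 ci4 cj1 cj2 cj3 cj4 / (i < j)%N.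
    move=> W; have [ij|ji|->] := ltngtP i j; last done.
      exact: W.
    by apply/esym; apply: W.
  exfalso.
  have [pe|pd] := eqVneq (odd i) (odd j).
    have ij2 : (i.+2 <= j)%N.
      rewrite ltn_neqAle ij andbT; apply/eqP => ej.
      by move: pe; rewrite -ej /=; case: (odd i).
    have : c i < c j.
      apply: (lt_trans ci3); apply: (le_lt_trans _ cj2); by rewrite ler_nat.
    by rewrite E ltxx.
  have sj : (-1) ^+ j.+1 = - (-1) ^+ i.+1 :> RR.
    rewrite -(signr_odd _ j.+1) -(signr_odd _ i.+1) /=.
    by move: pd; case: (odd i); case: (odd j) => //= _; rewrite ?expr0 ?expr1 ?opprK.
  move: cj4; rewrite sj -E mulNr => cj4; lra.
have : (size L <= size s)%N.
  apply: (uniq_leq_size uL) => x /mapP [i hi ->].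
  by have [] := Hc i (hi2 i hi).
by rewrite size_map size_iota leq_subLR addnC.
Qed.
End PL.

Section Sig.
Variable R : realType.

Lemma ext_endl (f : R -> R) a b al be : continuous f -> a < b ->
  (forall x, a < x < b -> f x = al*x+be) -> f a = al*a+be.
Proof.
move=> hf ab H.
pose h x := f x - (al * x + be).
have hc : continuous h.
  move=> x; apply: cvgB; first exact: hf.
  apply: cvgD; last exact: cvg_cst.
  apply: cvgM; [exact: cvg_cst| exact: cvg_id].
apply/eqP; rewrite -subr_eq0; apply/negPn/negP => hne.
have e0 : 0 < `|h a| by rewrite normr_gt0.
have := cvgr_dist_lt _ _ (hc a) _ e0.
move=> [d /= d0 Hd].
pose m := Num.min (d / 2) ((b - a) / 2).
have m0 : 0 < m by rewrite lt_min !divr_gt0 // subr_gt0.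
have mb : m < b - a.
  rewrite gt_min; apply/orP; right.
  rewrite ltr_pdivrMr // mulr_natr mulr2n ltrDl subr_gt0 //.
pose t := a + m.
have ht : h t = 0.
  rewrite /h H ?subrr // /t ltrDl m0 /= -ltrBrDl //.
have Hb : ball_ Num.Def.normr a d t.
  rewrite /ball_ /= /t opprD addrA subrr sub0r normrN gtr0_norm //.
  rewrite gt_min; apply/orP; left.
  rewrite ltr_pdivrMr // mulr_natr mulr2n ltrDl //.
by have := Hd t Hb; rewrite ht subr0 ltxx.
Qed.

Lemma ext_endr (f : R -> R) a b al be : continuous f -> a < b ->
  (forall x, a < x < b -> f x = al*x+be) -> f b = al*b+be.
Proof.
move=> hf ab H.
pose h x := f x - (al * x + be).
have hc : continuous h.
  move=> x; apply: cvgB; first exact: hf.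
  apply: cvgD; last exact: cvg_cst.
  apply: cvgM; [exact: cvg_cst| exact: cvg_id].
apply/eqP; rewrite -subr_eq0; apply/negPn/negP => hne.
have e0 : 0 < `|h b| by rewrite normr_gt0.
have := cvgr_dist_lt _ _ (hc b) _ e0.
move=> [d /= d0 Hd].
pose m := Num.min (d / 2) ((b - a) / 2).
have m0 : 0 < m by rewrite lt_min !divr_gt0 // subr_gt0.
have mb : m < b - a.
  rewrite gt_min; apply/orP; right.
  rewrite ltr_pdivrMr // mulr_natr mulr2n ltrDl subr_gt0 //.
pose t := b - m.
have ht : h t = 0.
  rewrite /h H ?subrr // /t; apply/andP; split; last by rewrite ltrBlDr ltrDl.
  by rewrite ltrBrDl addrC -ltrBrDl.
have Hb : ball_ Num.Def.normr b d t.
  rewrite /ball_ /= /t opprB addrC subrK gtr0_norm //.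
  rewrite gt_min; apply/orP; left.
  rewrite ltr_pdivrMr // mulr_natr mulr2n ltrDl //.
by have := Hd t Hb; rewrite ht subr0 ltxx.
Qed.

Lemma lower_exists (s : seq R) : exists x0, forall v, v \in s -> x0 < v.
Proof.
elim: s => [|y s [x0 H]]; first by exists 0.
exists (Num.min x0 (y - 1)) => v; rewrite in_cons => /orP [/eqP ->|/H hv].
  by rewrite gt_min ltrBlDr ltrDl ltr01 orbT.
by rewrite gt_min hv.
Qed.

End Sig.

Section Sig2.
Variable R : realType.
Lemma t2 (x y : R) b : (BSide b x <= BLeft y)%O -> x <= y.
Proof. by case: b; rewrite leBSide /= => // /ltW. Qed.
Lemma t3 (x y : R) b : x < y -> (BSide b x <= BLeft y)%O.
Proof. by case: b; rewrite leBSide /= => // /ltW. Qed.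

Lemma sigma_PL (sg : R -> R) p : continuous sg -> affine_partition sg p -> PLn sg p.-1.
Proof.
move=> hc [I [Hpart Haff]].
pose lowv (i : 'I_p) : option R :=
  match I i with Interval (BSide _ v) _ => Some v | _ => None end.
pose S := pmap lowv (enum 'I_p).
have memS : forall i v, lowv i = Some v -> v \in S.
  by move=> i v hv; rewrite mem_pmap; apply/mapP; exists i; rewrite ?mem_enum.
exists S; split.
  have [x0 Hx0] := lower_exists S.
  have [j [xj _]] := Hpart x0.
  have lj : lowv j = None.
    move: xj; case Ej: (I j) => [l u]; rewrite itv_boundlr => /andP [hl _].
    case: l Ej hl => [bb v|bb] Ej hl; last by rewrite /lowv Ej.
    have : v \in S by apply: (memS j); rewrite /lowv Ej.
    by move=> /Hx0; rewrite ltNge (t2 hl).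
  have hc' : has (predC (fun i => lowv i)) (enum 'I_p).
    by apply/hasP; exists j; rewrite ?mem_enum //= lj.
  have := count_predC (fun i => lowv i) (enum 'I_p).
  rewrite size_enum_ord; move: hc'; rewrite has_count size_pmap.
  set c := count (fun i : 'I_p => lowv i) _; set c2 := count (predC _) _.
  move=> h1 h2; have : (c < c + c2)%N by rewrite -{1}(addn0 c) ltn_add2l.
  rewrite h2 => hp; rewrite -ltnS prednK //; exact: leq_ltn_trans (leq0n _) hp.
move=> a b H.
have [ba|ab] := leP b a.
  exists 0, (sg a) => x /andP [h1 h2].
  have -> : x = a by apply/le_anti; rewrite h1 (le_trans h2 ba).
  by rewrite mul0r add0r.
pose y := (a + b) / 2.
have ay : a < y by rewrite /y; lra.
have yb : y < b by rewrite /y; lra.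
have [j [yj uj]] := Hpart y.
have [al [be Ea]] := Haff j.
have lowok : forall i l u, I i = Interval l u -> forall t w, a < w -> t < b ->
    (l <= BLeft t)%O -> (l <= BLeft w)%O.
  move=> i l u Ei t w aw tb; case: l Ei => [bb v|bb] Ei; last by clear Ei; case: bb.
  move=> /t2 vt.
  have : v \in S by apply: (memS i); rewrite /lowv Ei.
  move=> /H /orP [va|bv]; first exact: t3 (le_lt_trans va aw).
  by move: (le_lt_trans bv (le_lt_trans vt tb)); rewrite ltxx.
have Hin : forall z, a < z < b -> z \in I j.
  move=> z /andP [az zb]; have [k [zk _]] := Hpart z.
  move: yj; case Ej: (I j) => [l1 u1]; rewrite itv_boundlr => /andP [hl1 hu1].
  have [zy|yz] := leP z y.
    rewrite itv_boundlr; apply/andP; split; first exact: (lowok j l1 u1 Ej y z az yb hl1).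
    by apply: le_trans hu1; rewrite leBSide /=.
  move: zk; case Ek: (I k) => [l2 u2]; rewrite itv_boundlr => /andP [hl2 hu2].
  have yk : y \in I k.
    rewrite Ek itv_boundlr; apply/andP; split; first exact: (lowok k l2 u2 Ek z y ay zb hl2).
    by apply: le_trans hu2; rewrite leBSide /= ltW.
  have kj := uj k yk.
  by move: Ej; rewrite kj Ek => <-; rewrite itv_boundlr hl2 hu2.
have E : forall z, a < z < b -> sg z = al * z + be.
  by move=> z hz; apply: Ea; apply: Hin.
exists al, be => x /andP [ax xb].
move: ax; rewrite le_eqVlt => /orP [/eqP <-|ax]; first exact: ext_endl hc ab E.
move: xb; rewrite le_eqVlt => /orP [/eqP ->|xb]; first exact: ext_endr hc ab E.
by apply: E; rewrite ax xb.
Qed.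

End Sig2.

Unset Implicit Arguments.

Theorem corollary2 (R : realType) (dx d1 d2 p k1 k2 : nat) (sigma : R -> R)
  (alpha1 alpha2 : R) :
  (1 <= dx)%N -> (1 <= d1)%N -> (1 <= d2)%N ->
  continuous sigma -> (2 <= p)%N -> has_linear_pieces sigma p ->
  0 < alpha1 <= 1 -> 0 < alpha2 <= 1 ->
  (0 < k1)%N -> (0 < k2)%N ->
  alpha1 * d1%:R = k1%:R -> alpha2 * d2%:R = k2%:R ->
  forall N : nat, memorizes sigma dx k1 k2 N ->
    (N <= k1 * k2 * (p * (p - 1)) + k2 * (p - 1) + 2)%N.
Proof.
move=> dx1 _ _ hc p2 [Hpart _] _ _ _ _ _ _ N Hmem.
have Hsg := sigma_PL hc Hpart.
pose X (i : 'I_N) : 'cV[R]_dx := const_mx (i%:R).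
pose Y (i : 'I_N) : R := (-1) ^+ i.
have Xinj : injective X.
  move=> i j /matrixP /(_ (Ordinal dx1) ord0); rewrite !mxE => /eqP.
  by rewrite eqr_nat => /eqP /ord_inj.
have Ybd : forall i, -1 <= Y i <= 1.
  by move=> i; rewrite /Y -signr_odd; case: (odd i); rewrite ?expr0 ?expr1 /=; lra.
have [W1 [b1 [W2 [b2 [W3 [b3 Hf]]]]]] := Hmem X Y Xinj Ybd.
pose A (k : 'I_k1) := \sum_(l < dx) W1 k l.
pose F t := \sum_(j < k2) W3 0 j * sigma (\sum_(k < k1) W2 j k * sigma (A k * t + b1 k 0) + b2 j 0) + b3.
have HF : forall i : 'I_N, F i%:R = (-1) ^+ i.
  move=> i; rewrite -[RHS]/(Y i) -(Hf i) /net /F mxE; congr (_ + _).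
  apply: eq_bigr => j _; rewrite !mxE; congr (_ * sigma (_ + _)).
  apply: eq_bigr => k _; rewrite !mxE; congr (_ * sigma (_ + _)).
  rewrite /A mulr_suml; apply: eq_bigr => l _; rewrite !mxE //.
set q := p.-1 in Hsg.
pose m := (k1 * (0 + 1 * q) + 0)%N.
have H1 : forall j : 'I_k2,
    PLn (fun t => \sum_(k < k1) W2 j k * sigma (A k * t + b1 k 0) + b2 j 0) m.
  move=> j; apply: (@PLn_ext _ (fun t => \sum_(k < k1) W2 j k * sigma (A k * t + b1 k 0) + (0 * t + b2 j 0))).
    by move=> t; rewrite mul0r add0r.
  apply: PLn_add; last exact: PLn_aff.
  apply: PLn_sum => k; apply: PLn_scale.
  exact: (PLn_comp Hsg (PLn_aff _ _)).
have H2 : PLn F (k2 * (m + m.+1 * q) + 0).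
  apply: (@PLn_ext _ (fun t => \sum_(j < k2) W3 0 j * sigma (\sum_(k < k1) W2 j k * sigma (A k * t + b1 k 0) + b2 j 0) + (0 * t + b3))).
    by move=> t; rewrite mul0r add0r.
  apply: PLn_add; last exact: PLn_aff.
  apply: PLn_sum => j; apply: PLn_scale.
  exact: (PLn_comp Hsg (H1 j)).
have [s [hs Hs]] := H2.
have := alternation Hs (fun i hi => HF (Ordinal hi)).
move=> hN; apply: (leq_trans hN).
have ep : p = q.+1 by rewrite /q prednK // ltnW.
rewrite /m ep subn1 /=; rewrite /m in hs; clearbody q; rewrite leq_add2r; apply: (leq_trans hs); apply: eq_leq; ring.
Qed.
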